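(* The relation $\mathcal R_2=\{(w2w,w):w\in\{0,1\}^*\}\subseteq\{0,1,2\}^*\times\{0,1\}^*$ can be computed by a probabilistic finite state transducer with probability $2/3$, and by a quantum finite state transducer with probability $2/3$.
   Context: A probabilistic finite state transducer (pfst) is a tuple $T=(Q,\Sigma_1,\Sigma_2,V,f,q_0,Q_{\rm acc},Q_{\rm rej})$ with finite state set $Q$, finite input/output alphabets $\Sigma_1,\Sigma_2$, initial state $q_0$, disjoint accepting/rejecting sets $Q_{\rm acc},Q_{\rm rej}\subseteq Q$ (the other states are non-halting). For each $a\in\Sigma_1\cup\{\ddagger,\$\}$ ($\ddagger,\$$ are end markers) there is a stochastic $Q\times Q$ matrix $V_a$ and an output function $f_a:Q\to\Sigma_2^*$; $V_\$$ puts all probability on halting states. On input $v$ the machine reads $\ddagger v\$$; in state $q$ reading $a$ it appends $f_a(q)$ to the output tape and moves to state $p$ with probability $(V_a)_{qp}$; if $p$ is accepting (rejecting) it halts and accepts with the current output (rejects). $T(w|v)$ is the probability of accepting with output $w$ on input $v$. A quantum finite state transducer (qfst) has the same data except that each $V_a$ is a unitary on $\ell^2(Q)$ (and $V_\$$ maps the span of non-halting states into the span of halting states). Its non-halting part is a vector $\psi=\sum_{q,w}\alpha_{qw}|q\rangle\otimes|w\rangle\in\ell^2(Q\times\Sigma_2^* )$, initially $|q_0\rangle\otimes|\epsilon\rangle$; reading $a$ maps it to $\psi'=\sum_{q,w}\alpha_{qw}V_a|q\rangle\otimes|wf_a(q)\rangle$ with $V_a|q\rangle=\sum_p(V_a)_{qp}|p\rangle$,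 after which the squared norm of the component of $\psi'$ on $\mathrm{span}(Q_{\rm acc})\otimes|x\rangle$ is added to the probability of accepting with output $x$, the squared norm of the component on $\mathrm{span}(Q_{\rm rej})\otimes\ell^2(\Sigma_2^* )$ to the rejection probability, and the computation continues with the projection onto non-halting states. $T(w|v)$ is defined analogously. For $\alpha>1/2$, $T$ computes $\mathcal R$ with probability $\alpha$ if for all $v,w$: $(v,w)\in\mathcal R\Rightarrow T(w|v)\ge\alpha$ and $(v,w)\notin\mathcal R\Rightarrow T(w|v)\le1-\alpha$. *)

(* Defs.v *)
From mathcomp Require Import all_boot all_order all_algebra.
From mathcomp Require Import reals complex.
Set Implicit Arguments.
Unset Strict Implicit.
Unset Printing Implicit Defensive.
Import Order.TTheory GRing.Theory Num.Theory.
Local Open Scope ring_scope.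

(** Tape symbols: letters of the input alphabet plus the two end markers
    [TStart] (the left marker "‡") and [TEnd] (the right marker "$"). *)
Inductive tsym (A : Type) : Type := TSym of A | TStart | TEnd.
Arguments TStart {A}.
Arguments TEnd {A}.

Definition tape (A : Type) (v : seq A) : seq (tsym A) :=
  TStart :: rcons (map (@TSym A) v) TEnd.

(** ** Probabilistic finite state transducers.
    The state set is 'I_n.  [pV a] is the matrix V_a, with (pV a) q p the
    probability to move from q to p when reading a.  [pf a q] = f_a(q). *)
Record pfst (S1 S2 : Type) (R : realType) := Pfst {
  pn   : nat;
  pV   : tsym S1 -> 'M[R]_pn;
  pf   : tsym S1 -> 'I_pn -> seq S2;
  pq0  : 'I_pn;
  pacc : {set 'I_pn};
  prej : {set 'I_pn} }.
Arguments pn {S1 S2 R} _.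
Arguments pV {S1 S2 R} _ _.
Arguments pf {S1 S2 R} _ _ _.
Arguments pq0 {S1 S2 R} _.
Arguments pacc {S1 S2 R} _.
Arguments prej {S1 S2 R} _.

Definition halting n (acc rej : {set 'I_n}) (q : 'I_n) := (q \in acc) || (q \in rej).

Definition is_pfst S1 S2 (R : realType) (T : pfst S1 S2 R) : Prop :=
  [/\ [disjoint pacc T & prej T],
      (forall a q p, 0 <= pV T a q p),
      (forall a q, \sum_p pV T a q p = 1) &
      (forall q p, ~~ halting (pacc T) (prej T) p -> pV T TEnd q p = 0)].

Fixpoint pacc_from S1 (S2 : eqType) (R : realType) (T : pfst S1 S2 R)
    (q : 'I_(pn T)) (s : seq (tsym S1)) (out w : seq S2) : R :=
  match s with
  | [::] => 0
  | a :: s' =>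
      let out' := out ++ pf T a q in
      \sum_p pV T a q p *
        (if p \in pacc T then (out' == w)%:R
         else if p \in prej T then 0
         else @pacc_from S1 S2 R T p s' out' w)
  end.

Definition pfst_prob S1 (S2 : eqType) (R : realType) (T : pfst S1 S2 R)
    (w : seq S2) (v : seq S1) : R :=
  @pacc_from S1 S2 R T (pq0 T) (tape v) [::] w.

(** ** Quantum finite state transducers (amplitudes in R[i], the complex numbers
    over the real field R).  (qV a) q p is the coefficient (V_a)_{qp}, i.e.
    V_a|q> = \sum_p (qV a) q p |p>. *)
Record qfst (S1 S2 : Type) (R : realType) := Qfst {
  qn   : nat;
  qV   : tsym S1 -> 'M[R[i]]_qn;
  qf   : tsym S1 -> 'I_qn -> seq S2;
  qq0  : 'I_qn;
  qacc : {set 'I_qn};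
  qrej : {set 'I_qn} }.
Arguments qn {S1 S2 R} _.
Arguments qV {S1 S2 R} _ _.
Arguments qf {S1 S2 R} _ _ _.
Arguments qq0 {S1 S2 R} _.
Arguments qacc {S1 S2 R} _.
Arguments qrej {S1 S2 R} _.

Definition unitary (R : realType) n (M : 'M[R[i]]_n) : Prop :=
  M *m (map_mx (@conjc R) M)^T = 1%:M.

Definition is_qfst S1 S2 (R : realType) (T : qfst S1 S2 R) : Prop :=
  [/\ [disjoint qacc T & qrej T],
      (forall a, unitary (qV T a)) &
      (forall q p, ~~ halting (qacc T) (qrej T) q ->
                   ~~ halting (qacc T) (qrej T) p -> qV T TEnd q p = 0)].

Definition sqmod (R : realType) (z : R[i]) : R :=
  (complex.Re z) ^+ 2 + (complex.Im z) ^+ 2.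

(** One step of the evolution: from the non-halting vector psi (a function
    Q x S2^* -> C), reading a, gives psi' with
    psi'(p, x) = \sum_q \sum_{y : y ++ f_a(q) = x} psi(q, y) (V_a)_{qp}. *)
Definition qstep S1 (S2 : eqType) (R : realType) (T : qfst S1 S2 R)
    (a : tsym S1) (psi : 'I_(qn T) -> seq S2 -> R[i]) :
    'I_(qn T) -> seq S2 -> R[i] :=
  fun p x =>
    \sum_q (if suffix (qf T a q) x
            then psi q (take (size x - size (qf T a q)) x) * qV T a q p
            else 0).

Definition qproj S1 S2 (R : realType) (T : qfst S1 S2 R)
    (psi : 'I_(qn T) -> seq S2 -> R[i]) : 'I_(qn T) -> seq S2 -> R[i] :=
  fun p x => if halting (qacc T) (qrej T) p then 0 else psi p x.

Fixpoint qacc_from S1 (S2 : eqType) (R : realType) (T : qfst S1 S2 R)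
    (psi : 'I_(qn T) -> seq S2 -> R[i]) (s : seq (tsym S1)) (w : seq S2) : R :=
  match s with
  | [::] => 0
  | a :: s' =>
      let psi' := @qstep S1 S2 R T a psi in
      (\sum_(p in qacc T) sqmod (psi' p w)) + @qacc_from S1 S2 R T (@qproj S1 S2 R T psi') s' w
  end.

Definition qinit S1 (S2 : eqType) (R : realType) (T : qfst S1 S2 R) :
    'I_(qn T) -> seq S2 -> R[i] :=
  fun q x => ((q == qq0 T) && (x == [::]))%:R.

Definition qfst_prob S1 (S2 : eqType) (R : realType) (T : qfst S1 S2 R)
    (w : seq S2) (v : seq S1) : R :=
  @qacc_from S1 S2 R T (@qinit S1 S2 R T) (tape v) w.

Definition computes S1 S2 (R : realType) (prob : seq S2 -> seq S1 -> R)
    (Rel : seq S1 -> seq S2 -> bool) (alpha : R) : Prop :=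
  forall v w, (Rel v w -> alpha <= prob w v) /\ (~~ Rel v w -> prob w v <= 1 - alpha).

Definition emb01 (b : 'I_2) : 'I_3 := widen_ord (leqnSn 2) b.
Definition sym2 : 'I_3 := @Ordinal 3 2 isT.
Definition R2 (v : seq 'I_3) (w : seq 'I_2) : bool :=
  v == map emb01 w ++ sym2 :: map emb01 w.

(* Main.v *)
Require Import Defs.
From mathcomp Require Import all_boot all_order all_algebra.
From mathcomp Require Import reals complex.
Local Open Scope ring_scope.
From mathcomp Require Import all_boot all_order all_algebra.
From mathcomp Require Import reals complex.
From mathcomp Require Import ring lra.
From mathcomp Require Import all_fingroup.
From Stdlib Require Import FunctionalExtensionality.
Set Implicit Arguments.
Unset Strict Implicit.
Unset Printing Implicit Defensive.
Import Order.TTheory GRing.Theory Num.Theory.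
Local Open Scope ring_scope.

Definition notstart A (a : tsym A) := match a with TStart => false | _ => true end.

Fixpoint acc1 n A (B : eqType) (G : tsym A -> 'I_n -> 'I_n) (F : tsym A -> 'I_n -> seq B)
  (acc rej : {set 'I_n}) (q : 'I_n) (y : seq B) (s : seq (tsym A)) (w : seq B) : bool :=
  match s with
  | [::] => false
  | a :: s' => let p := G a q in let y' := y ++ F a q in
     if p \in acc then y' == w else if p \in rej then false
     else acc1 G F acc rej p y' s' w
  end.

Lemma sum_delta (R : nmodType) n (c : 'I_n) (X : 'I_n -> R) :
  \sum_p (if c == p then X p else 0) = X c.
Proof.
rewrite (bigD1 c) //= eqxx big1 ?addr0 // => p /negPf; rewrite eq_sym => ->.
done.
Qed.

Lemma sum_deltaM (R : pzSemiRingType) n (c : 'I_n) (X : 'I_n -> R) :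
  \sum_p ((c == p)%:R * X p) = X c.
Proof.
rewrite -[RHS](sum_delta c); apply: eq_bigr => p _.
by case: (c == p); rewrite ?mul1r ?mul0r.
Qed.

Lemma pacc_acc1 S1 (S2 : eqType) (R : realType) (T : pfst S1 S2 R) G :
  (forall a, notstart a -> forall q p, pV T a q p = (G a q == p)%:R) ->
  forall s q out w, all (@notstart S1) s ->
  pacc_from q s out w = (acc1 G (pf T) (pacc T) (prej T) q out s w)%:R.
Proof.
move=> HG; elim=> [|a s IH] q out w //= /andP[na ns].
under eq_bigr => p _ do rewrite HG //.
rewrite sum_deltaM.
case: ifP => _ //; case: ifP => _ //.
exact: IH.
Qed.

Lemma acc1_ext n A (B : eqType) (G1 G2 : tsym A -> 'I_n -> 'I_n) F acc rej :
  (forall a q, ~~ halting acc rej q -> G1 a q = G2 a q) ->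
  forall s q y w, ~~ halting acc rej q ->
  @acc1 n A B G1 F acc rej q y s w = acc1 G2 F acc rej q y s w.
Proof.
move=> HG; elim=> [|a s IH] q y w hq //=.
rewrite HG //.
case: ifP => ha //; case: ifP => hr //.
by apply: IH; rewrite /halting ha hr.
Qed.

Section Q.
Variables (S1 : Type) (S2 : eqType) (R : realType) (T : qfst S1 S2 R).

Definition psi_of (c : R[i]) (cfg : 'I_(qn T) -> option (seq S2)) :
  'I_(qn T) -> seq S2 -> R[i] :=
  fun q x => if cfg q is Some y then (if x == y then c else 0) else 0.

Lemma suffix_take (f x y : seq S2) :
  suffix f x && (take (size x - size f) x == y) = (x == y ++ f).
Proof.
apply/andP/eqP => [[/suffixP[s ->]] | ->].
  by rewrite size_cat addnK take_size_cat // => /eqP ->.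
by rewrite suffix_suffix size_cat addnK take_size_cat.
Qed.

Lemma qstep_perm a (g : {perm 'I_(qn T)}) c cfg :
  (forall q p, qV T a q p = (g q == p)%:R) ->
  qstep a (psi_of c cfg) =
  psi_of c (fun p => omap (fun y => y ++ qf T a ((g^-1)%g p)) (cfg ((g^-1)%g p))).
Proof.
move=> HV; apply: functional_extensionality => p.
apply: functional_extensionality => x.
rewrite /qstep (bigD1 ((g^-1)%g p)) //= big1 ?addr0; last first.
  move=> q hq; rewrite HV.
  have -> : (g q == p) = false.
    apply/negbTE; apply: contra hq => /eqP <-; by rewrite permK.
  by case: ifP; rewrite ?mulr0.
rewrite HV permKV eqxx mulr1 /psi_of.
case: (cfg ((g^-1)%g p)) => [y|] /=; last by case: ifP.
rewrite -suffix_take.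
by case: (suffix _ _) => //=; case: ifP.
Qed.

Lemma qproj_psi c cfg :
  qproj (psi_of c cfg) =
  psi_of c (fun p => if halting (qacc T) (qrej T) p then None else cfg p).
Proof.
apply: functional_extensionality => p.
apply: functional_extensionality => x.
by rewrite /qproj /psi_of; case: ifP.
Qed.

Lemma sqmod0 : sqmod (0 : R[i]) = 0.
Proof. by rewrite /sqmod /= expr0n /= addr0. Qed.

Lemma qacc_psi (g : tsym S1 -> {perm 'I_(qn T)}) :
  (forall a, notstart a -> forall q p, qV T a q p = (g a q == p)%:R) ->
  forall s c cfg w, all (@notstart S1) s ->
  qacc_from (psi_of c cfg) s w =
  sqmod c * \sum_q (if cfg q is Some y then
      (acc1 (fun a q => g a q) (qf T) (qacc T) (qrej T) q y s w)%:R else 0).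
Proof.
move=> HG; elim=> [|a s IH] c cfg w.
  move=> _ /=; rewrite big1 ?mulr0 // => q _; by case: (cfg q).
move=> /= /andP[na ns].
rewrite (qstep_perm (g:=g a)); last exact: HG.
rewrite qproj_psi IH //.
rewrite big_mkcond /= mulr_sumr -big_split /=.
rewrite (reindex_inj (@perm_inj _ (g a))) /=.
rewrite mulr_sumr.
apply: eq_bigr => q _.
rewrite /psi_of /= !permK.
case: (cfg q) => [y|] /=; last first.
  by rewrite if_same /= mulr0 addr0; case: ifP; rewrite ?sqmod0.
rewrite /halting.
case: ifP => ha /=.
  rewrite mulr0 addr0 eq_sym.
  by case: ifP; rewrite ?sqmod0 ?mulr1 ?mulr0.
case: ifP => hr /=; first by rewrite add0r mulr0.
by rewrite add0r.
Qed.

End Q.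


Definition twoN (k : nat) : nat :=
  match k with 0=>5|5=>0|1=>3|3=>8|8=>1|2=>4|4=>9|9=>2|_=>k end.
Definition twoI (k : nat) : nat :=
  match k with 5=>0|0=>5|3=>1|8=>3|1=>8|4=>2|9=>4|2=>9|_=>k end.
Definition bitN (k : nat) : nat := match k with 0=>5|5=>0|_=>k end.
Definition endN (k : nat) : nat :=
  match k with 0=>9|9=>0|1=>5|5=>1|2=>8|8=>2|3=>6|6=>3|4=>7|7=>4|_=>k end.

Definition gnat (a : tsym 'I_3) (k : nat) : nat :=
  match a with TSym x => if (nat_of_ord x == 2)%N then twoN k else bitN k
  | TStart => k | TEnd => endN k end.
Definition ginv (a : tsym 'I_3) (k : nat) : nat :=
  match a with TSym x => if (nat_of_ord x == 2)%N then twoI k else bitN k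
  | TStart => k | TEnd => endN k end.

Lemma gnat_lt a (i : 'I_10) : (gnat a i < 10)%N.
Proof.
case: i => k hk /=; case: a => [x||] /=; [case: (_ == _)|..];
  do 10?[case: k hk => [|k] hk //].
Qed.

Lemma gnatK a (i : 'I_10) : ginv a (gnat a i) = i.
Proof.
case: i => k hk /=; case: a => [x||] /=; [case: (_ == _)|..];
  do 10?[case: k hk => [|k] hk //].
Qed.

Definition gfun a (i : 'I_10) : 'I_10 := Ordinal (gnat_lt a i).

Lemma gfun_inj a : injective (gfun a).
Proof.
move=> i j /(congr1 val) /= h; apply: ord_inj.
by rewrite -(gnatK a i) h gnatK.
Qed.

Definition gperm a : {perm 'I_10} := perm (@gfun_inj a).

Definition fo (a : tsym 'I_3) (q : 'I_10) : seq 'I_2 :=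
  match a with TSym x => if (nat_of_ord x < 2)%N && ((nat_of_ord q == 1)%N || (nat_of_ord q == 4)%N)
                         then [:: inord x] else [::]
  | _ => [::] end.

Definition accS : {set 'I_10} := [set i : 'I_10 | (nat_of_ord i == 6)%N || (nat_of_ord i == 7)%N].
Definition rejS : {set 'I_10} :=
  [set i : 'I_10 | [|| (nat_of_ord i == 5)%N, (nat_of_ord i == 8)%N | (nat_of_ord i == 9)%N]].

Definition count2 (v : seq 'I_3) := count (fun x : 'I_3 => nat_of_ord x == 2)%N v.
Definition idx2 (v : seq 'I_3) := find (fun x : 'I_3 => nat_of_ord x == 2)%N v.
Definition bit (x : 'I_3) : 'I_2 := inord x.
Definition tp (v : seq 'I_3) := rcons (map (@TSym _) v) TEnd.

Notation run := (acc1 gfun fo accS rejS).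

Lemma run0 v y w q : nat_of_ord q = 0%N -> run q y (tp v) w = false.
Proof.
case: v => [|x v] hq /=; rewrite !inE /= hq //=.
by rewrite !if_same.
Qed.

Lemma run3 v y w q : nat_of_ord q = 3%N -> run q y (tp v) w = (count2 v == 0)%N && (w == y).
Proof.
elim: v y q => [|x v IH] y q hq; rewrite /tp /= !inE /= hq /=.
  by rewrite cats0 eq_sym.
case: (boolP (nat_of_ord x == 2%N)) => hx.
  by [].
rewrite /= -/(tp v) IH /=; last by rewrite /= hq (negbTE hx).
by rewrite /= andbF cats0.
Qed.

Lemma lt2 (x : 'I_3) : ~~ (nat_of_ord x == 2)%N -> (nat_of_ord x < 2)%N.
Proof. by case: x => [[|[|[|k]]] hk]. Qed.

Lemma run4 v y w q : nat_of_ord q = 4%N ->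
  run q y (tp v) w = (count2 v == 0)%N && (w == y ++ map bit v).
Proof.
elim: v y q => [|x v IH] y q hq; rewrite /tp /= !inE /= hq /=.
  by rewrite !cats0 eq_sym.
case: (boolP (nat_of_ord x == 2%N)) => hx.
  by [].
rewrite /= -/(tp v) IH /=; last by rewrite hq (negbTE hx).
by rewrite /= (lt2 hx) /= -catA.
Qed.

Lemma run1 v y w q : nat_of_ord q = 1%N ->
  run q y (tp v) w = (count2 v == 1)%N && (w == y ++ map bit (take (idx2 v) v)).
Proof.
elim: v y q => [|x v IH] y q hq; rewrite /tp /= !inE /= hq /=.
  by [].
case: (boolP (nat_of_ord x == 2%N)) => hx.
  rewrite /= -/(tp v) run3 /=; last by rewrite /= hq hx.
  by rewrite (eqP hx) /= add1n eqSS cats0.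
rewrite /= -/(tp v) IH /=; last by rewrite hq (negbTE hx).
by rewrite (lt2 hx) /= -catA.
Qed.

Lemma run2 v y w q : nat_of_ord q = 2%N ->
  run q y (tp v) w = (count2 v == 1)%N && (w == y ++ map bit (drop (idx2 v).+1 v)).
Proof.
elim: v y q => [|x v IH] y q hq; rewrite /tp /= !inE /= hq /=.
  by [].
case: (boolP (nat_of_ord x == 2%N)) => hx.
  rewrite /= -/(tp v) run4 /=; last by rewrite /= hq hx.
  by rewrite /= andbF cats0 add1n eqSS drop0.
rewrite /= -/(tp v) IH /=; last by rewrite hq (negbTE hx).
by rewrite /= andbF cats0.
Qed.

Lemma count2_emb w : count2 (map emb01 w) = 0%N.
Proof. by elim: w => //= b w; rewrite /count2 => ->; case: b => [[|[|]]]. Qed.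

Lemma idx2_emb w t : idx2 (map emb01 w ++ t) = (size w + idx2 t)%N.
Proof. by elim: w => //= b w; rewrite /idx2 /= => ->; case: b => [[|[|]]]. Qed.

Lemma bit_emb w : map bit (map emb01 w) = w.
Proof. by elim: w => //= b w ->; rewrite /bit /emb01 /= inord_val. Qed.

Lemma emb_bit t : count2 t = 0%N -> map emb01 (map bit t) = t.
Proof.
elim: t => //= x t IH; rewrite /count2 /=.
case: (boolP (nat_of_ord x == 2%N)) => hx //= ht.
rewrite IH //; congr (_ :: _); apply: val_inj => /=.
by rewrite inordK // lt2.
Qed.

Lemma split2 v : (count2 v == 1)%N ->
  [/\ v = take (idx2 v) v ++ sym2 :: drop (idx2 v).+1 v,
      count2 (take (idx2 v) v) = 0%N & count2 (drop (idx2 v).+1 v) = 0%N].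
Proof.
elim: v => //= x v IH; rewrite /count2 /idx2 /=.
case: (boolP (nat_of_ord x == 2%N)) => hx /=.
  rewrite add1n eqSS drop0 => /eqP h; split => //.
  by congr (_ :: _); apply: val_inj; rewrite /= (eqP hx).
rewrite add0n => /IH [E c1 c2]; split => //.
  by rewrite {1}E.
by rewrite (negbTE hx).
Qed.

Lemma key v w : R2 v w =
  [&& (count2 v == 1)%N, w == map bit (take (idx2 v) v) &
      w == map bit (drop (idx2 v).+1 v)].
Proof.
apply/idP/idP.
  move/eqP ->.
  rewrite idx2_emb /idx2 /= addn0 /count2 count_cat /= -!/(count2 _) count2_emb.
  rewrite -(size_map emb01 w) take_size_cat // bit_emb eqxx /=.
  by rewrite -[(size _).+1]add1n -drop_drop drop_size_cat //= drop0 bit_emb eqxx.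
case/and3P => c1 /eqP e1 /eqP e2.
case: (split2 c1) => E c3 c4.
have h1 : map emb01 w = take (idx2 v) v by rewrite e1 emb_bit.
have h2 : map emb01 w = drop (idx2 v).+1 v by rewrite e2 emb_bit.
by rewrite /R2 {1}h1 h2 -E.
Qed.

Definition o0 : 'I_10 := @Ordinal 10 0 isT.
Definition o1 : 'I_10 := @Ordinal 10 1 isT.
Definition o2 : 'I_10 := @Ordinal 10 2 isT.

Lemma sum3 (R : nmodType) (X : 'I_10 -> R) :
  \sum_p (if (nat_of_ord p < 3)%N then X p else 0) = X o0 + X o1 + X o2.
Proof.
rewrite !big_ord_recl big_ord0 /= !addr0 !addrA.
by congr (_ + _ + _); congr X; apply: val_inj.
Qed.

Lemma sum3c (R : nmodType) (c : R) :
  \sum_(p < 10) (if (nat_of_ord p < 3)%N then c else 0) = c + c + c.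
Proof. exact: (sum3 (fun _ => c)). Qed.

Lemma nonhalt_lt5 q : ~~ halting accS rejS q -> (nat_of_ord q < 5)%N.
Proof. by rewrite /halting !inE; case: q => [[|[|[|[|[|[|[|[|[|[|k]]]]]]]]]] hk]. Qed.

Lemma gend_halt q : (nat_of_ord q < 5)%N -> halting accS rejS (gfun TEnd q).
Proof. by rewrite /halting !inE; case: q => [[|[|[|[|[|[|[|[|[|[|k]]]]]]]]]] hk]. Qed.

Lemma halt_ge5 q : halting accS rejS q -> (5 <= nat_of_ord q)%N.
Proof. by rewrite /halting !inE; case: q => [[|[|[|[|[|[|[|[|[|[|k]]]]]]]]]] hk]. Qed.

Lemma disj_AR : [disjoint accS & rejS].
Proof.
apply/pred0P => q /=; rewrite !inE.
by case: q => [[|[|[|[|[|[|[|[|[|[|k]]]]]]]]]] hk].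
Qed.

Lemma all_tp v : all (@notstart _) (tp v).
Proof. by rewrite /tp all_rcons /=; elim: v. Qed.

Lemma sum_delta1 (R : pzSemiRingType) n (c : 'I_n) : \sum_p ((c == p)%:R : R) = 1.
Proof.
rewrite -[RHS](sum_deltaM c (fun _ => 1)); apply: eq_bigr => p _; by rewrite mulr1.
Qed.

Lemma fin (R : realType) (c b1 b2 : bool) :
  ([&& c, b1 & b2] -> 2 / 3 <= ((c && b1)%:R + (c && b2)%:R) / 3 :> R) /\
  (~~ [&& c, b1 & b2] -> ((c && b1)%:R + (c && b2)%:R) / 3 <= 1 - 2 / 3 :> R).
Proof. by case: c; case: b1; case: b2; split => //= _; lra. Qed.

Definition gP (q : 'I_10) : 'I_10 := if (nat_of_ord q < 5)%N then gfun TEnd q else q.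
Definition GP (a : tsym 'I_3) q := match a with TEnd => gP q | _ => gfun a q end.

Lemma gP_halt q : halting accS rejS (gP q).
Proof. by rewrite /gP /halting !inE; case: q => [[|[|[|[|[|[|[|[|[|[|k]]]]]]]]]] hk]. Qed.

Definition pVm (R : realType) (a : tsym 'I_3) : 'M[R]_10 :=
  match a with
  | TStart => \matrix_(q, p) (if (nat_of_ord q == 0)%N then
                 (if (nat_of_ord p < 3)%N then 3^-1 else 0) else (q == p)%:R)
  | _ => \matrix_(q, p) (GP a q == p)%:R
  end.

Definition Tp (R : realType) : pfst 'I_3 'I_2 R :=
  @Pfst _ _ R 10 (@pVm R) fo ord0 accS rejS.

Lemma Tp_ok (R : realType) : is_pfst (Tp R).
Proof.
split.
- exact: disj_AR.
- move=> a q p; case: a => [x||] /=; rewrite mxE ?ler0n //.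
  by case: ifP => _; [case: ifP => _; rewrite ?invr_ge0 ?ler0n|rewrite ler0n].
- move=> a q; case: a => [x||] /=; under eq_bigr do rewrite mxE.
  + by rewrite sum_delta1.
  + case: (nat_of_ord q == 0%N); last by rewrite sum_delta1.
    by rewrite sum3c; field.
  + by rewrite sum_delta1.
- move=> q p hp /=; rewrite mxE.
  case: eqP => // e; move: hp; by rewrite -e gP_halt.
Qed.

Lemma GP_run (v : seq 'I_3) q y w : ~~ halting accS rejS q ->
  acc1 GP fo accS rejS q y (tp v) w = run q y (tp v) w.
Proof.
apply: acc1_ext => a q' hq'; case: a => [x||] //=.
by rewrite /gP (nonhalt_lt5 hq').
Qed.

Lemma Tp_prob (R : realType) v w :
  pfst_prob (Tp R) w v =
  ((run o1 [::] (tp v) w)%:R + (run o2 [::] (tp v) w)%:R) / 3.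
Proof.
rewrite /pfst_prob /tape -/(tp v) /=.
under eq_bigr => p _ do rewrite mxE /=.
rewrite (eq_bigr (fun p => if (nat_of_ord p < 3)%N then 3^-1 *
   (if p \in accS then (([::] ++ fo TStart ord0) == w)%:R
    else if p \in rejS then 0 else pacc_from (T := Tp R) p (tp v) ([::] ++ fo TStart ord0) w) else 0)); last first.
  by move=> p _; case: ifP => _; rewrite ?mul0r.
rewrite sum3 /= !inE /=.
have HG : forall a, notstart a -> forall q p, pV (Tp R) a q p = (GP a q == p)%:R.
  by move=> a na q p; case: a na => [x||] //= _; rewrite mxE.
rewrite !(pacc_acc1 HG) ?all_tp //=.
rewrite !GP_run ?(run0 _ _ _ (q := o0)) //; try by rewrite /halting !inE.
by rewrite mulr0 add0r -mulrDr mulrC.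
Qed.

Section QF.
Variable R : realType.
Local Open Scope complex_scope.

Definition s3 : R := Num.sqrt (3^-1).
Definition h3 (i j : nat) : R :=
  if (i == 0)%N || (j == 0)%N then s3
  else if (i == j)%N then (1 - s3) / 2 else - (1 + s3) / 2.
Definition hR (i j : 'I_10) : R :=
  if (nat_of_ord i < 3)%N && (nat_of_ord j < 3)%N then h3 i j else (i == j)%:R.

Lemma s3s : s3 * s3 = 3^-1.
Proof. by rewrite -expr2 sqr_sqrtr // invr_ge0 ler0n. Qed.

Lemma hR_orth i j : \sum_k hR i k * hR j k = (i == j)%:R.
Proof.
have [hi|hi] := ltnP i 3; last first.
  rewrite (eq_bigr (fun k => (i == k)%:R * hR j k)); last first.
    by move=> k _; rewrite /hR (ltnNge i 3) hi /=.
  by rewrite sum_deltaM /hR (ltnNge i 3) hi andbF /= eq_sym.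
have [hj|hj] := ltnP j 3; last first.
  rewrite (eq_bigr (fun k => (j == k)%:R * hR i k)); last first.
    by move=> k _; rewrite mulrC; congr (_ * _); rewrite /hR (ltnNge j 3) hj.
  by rewrite sum_deltaM /hR (ltnNge j 3) hj andbF.
rewrite (eq_bigr (fun k => if (nat_of_ord k < 3)%N then h3 i k * h3 j k else 0)); last first.
  move=> k _; rewrite /hR hi hj /=; case: ifP => // hk.
  have -> : (i == k) = false.
    by apply/negbTE; apply: contraFN hk => /eqP <-.
  by rewrite mul0r.
rewrite sum3 /h3 /=.
have hs := s3s.
case: i hi => [[|[|[|k]]] hk] // _; case: j hj => [[|[|[|m]]] hm] // _;
  rewrite /= ?eqxx; try (apply/eqP; rewrite -val_eqE /=; done); nra.
Qed.
End QF.

Section QF2.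
Variable R : realType.
Local Open Scope complex_scope.

Definition qVm (a : tsym 'I_3) : 'M[R[i]]_10 :=
  match a with
  | TStart => \matrix_(i, j) (hR R i j)%:C
  | _ => \matrix_(i, j) ((gperm a i == j)%:R)
  end.

Definition Tq : qfst 'I_3 'I_2 R := @Qfst _ _ R 10 qVm fo ord0 accS rejS.

Lemma qVm_unitary a : unitary (qVm a).
Proof.
rewrite /unitary; apply/matrixP => i j; rewrite !mxE.
case: a => [x||] /=.
- under eq_bigr do rewrite !mxE conjc_nat.
  by rewrite sum_deltaM (inj_eq perm_inj) eq_sym.
- under eq_bigr do rewrite !mxE conjc_real -rmorphM.
  by rewrite -rmorph_sum hR_orth rmorph_nat.
- under eq_bigr do rewrite !mxE conjc_nat.
  by rewrite sum_deltaM (inj_eq perm_inj) eq_sym.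
Qed.

Lemma Tq_ok : is_qfst Tq.
Proof.
split.
- exact: disj_AR.
- exact: qVm_unitary.
- move=> q p hq hp /=; rewrite mxE permE.
  case: eqP => // e; move: hp; rewrite -e gend_halt //.
  exact: nonhalt_lt5.
Qed.
End QF2.

Section QF3.
Variable R : realType.
Local Open Scope complex_scope.

Definition cfg1 : 'I_10 -> option (seq 'I_2) :=
  fun p => if (nat_of_ord p < 3)%N then Some [::] else None.

Lemma qstep0 : qstep (T := Tq R) TStart (qinit (T := Tq R)) =
  psi_of (T := Tq R) (s3 R)%:C cfg1.
Proof.
apply: functional_extensionality => p; apply: functional_extensionality => x.
rewrite /qstep /psi_of /cfg1 /=.
under eq_bigr do rewrite suffix0s subn0 take_size.
case: (x =P [::]) => [->|hx].
  under eq_bigr do rewrite /qinit andbT eq_sym.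
  rewrite sum_deltaM mxE /hR /= /h3 /=.
  case: ifP => // hp.
  have -> : (ord0 == p) = false.
    by apply/negbTE; apply: contraFN hp => /eqP <-.
  done.
rewrite big1; last by move=> q _; rewrite /qinit (introF eqP hx) andbF mul0r.
by case: ifP => //; case: eqP.
Qed.

Lemma lt3_nonhalt (q : 'I_10) : (nat_of_ord q < 3)%N -> halting accS rejS q = false.
Proof.
move=> hq; apply/negbTE; apply: contraTN hq => /halt_ge5 h.
by rewrite -leqNgt (leq_trans _ h).
Qed.

Lemma Tq_prob v w :
  qfst_prob (Tq R) w v =
  ((run o1 [::] (tp v) w)%:R + (run o2 [::] (tp v) w)%:R) / 3.
Proof.
rewrite /qfst_prob /tape -/(tp v) /=.
rewrite qstep0 qproj_psi.
rewrite big1 ?add0r; last first.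
  move=> p hp; rewrite /psi_of /cfg1.
  have h5 : (5 <= nat_of_ord p)%N by apply: halt_ge5; rewrite /halting hp.
  have -> : (nat_of_ord p < 3)%N = false.
    by apply/negbTE; rewrite -leqNgt; apply: leq_trans h5.
  exact: sqmod0.
have HG : forall a, notstart a -> forall q p,
    qV (Tq R) a q p = (gperm a q == p)%:R.
  by move=> a na q p; case: a na => [x||] //= _; rewrite mxE.
rewrite (qacc_psi HG) ?all_tp //.
rewrite (eq_bigr (fun q : 'I_10 => if (nat_of_ord q < 3)%N then
   (acc1 (fun a q => gperm a q) fo accS rejS q [::] (tp v) w)%:R else 0)); last first.
  move=> q _; rewrite /cfg1 /=; have [hq|hq] := boolP (nat_of_ord q < 3)%N.
    by rewrite lt3_nonhalt.
  by rewrite if_same.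
rewrite sum3.
have E q : (nat_of_ord q < 3)%N ->
    acc1 (fun a q => gperm a q) fo accS rejS q [::] (tp v) w = run q [::] (tp v) w.
  move=> hq; apply: acc1_ext; last by rewrite lt3_nonhalt.
  by move=> a q' _; rewrite permE.
rewrite !E // (run0 _ _ _ (q := o0)) //.
rewrite /sqmod /= expr0n /= addr0 sqr_sqrtr ?invr_ge0 ?ler0n //.
by rewrite add0r mulrC.
Qed.
End QF3.

Theorem theorem6 (R : realType) :
  (exists T : pfst 'I_3 'I_2 R, is_pfst T /\ computes (pfst_prob T) R2 (2 / 3))
  /\
  (exists T : qfst 'I_3 'I_2 R, is_qfst T /\ computes (qfst_prob T) R2 (2 / 3)).
Proof.
split.
  exists (Tp R); split; first exact: Tp_ok.
  move=> v w; rewrite Tp_prob (run1 _ _ _ (q := o1)) // (run2 _ _ _ (q := o2)) //.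
  rewrite key !cat0s; exact: fin.
exists (Tq R); split; first exact: Tq_ok.
move=> v w; rewrite Tq_prob (run1 _ _ _ (q := o1)) // (run2 _ _ _ (q := o2)) //.
rewrite key !cat0s; exact: fin.
Qed.
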